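(* Consider a Huffman-type combining procedure implemented with the two-queue method: there is a first queue of single (leaf) items and a second queue of compound items; each step removes two nodes, makes them the two children of a new compound node, and appends that new node to the tail of the second queue, until a single node (the root of the final tree) remains; in particular, once the first queue is empty, each step removes the two nodes at the head of the second queue. Suppose that at some step the first queue is empty and $n\ge 1$ compound items remain (all in the second queue). Then, in the final tree, the nodes corresponding to these $n$ compound items lie on levels (depths from the root) differing by at most one, i.e., they are the leaves of a complete binary tree; furthermore, every one of these items that ends up at level $\lceil \log_2 n\rceil$ is closer to the head of the second queue than every one of these items that ends up at level $\lceil \log_2 n\rceil-1$ (if any). *)

(* Defs.v *)
From mathcomp Require Import all_boot.
Set Implicit Arguments. Unset Strict Implicit. Unset Printing Implicit Defensive.

(* A leaf
   [BLeaf i] stands for the i-th compound item of the second queue (counted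
   from the head, starting at 0) at the moment the first queue becomes
   empty; these items are opaque for the rest of the procedure. *)
Inductive btree : Type :=
| BLeaf of nat
| BNode of btree & btree.

Definition step (q : seq btree) : seq btree :=
  match q with
  | a :: b :: r => rcons r (BNode a b)
  | _ => q
  end.

Fixpoint depth_of (i : nat) (t : btree) : option nat :=
  match t with
  | BLeaf j => if i == j then Some 0 else None
  | BNode l r =>
      match depth_of i l with
      | Some d => Some d.+1
      | None => omap succn (depth_of i r)
      end
  end.

Definition init_queue (n : nat) : seq btree := map BLeaf (iota 0 n).

(* Main.v *)
Require Import Defs.
From mathcomp Require Import all_boot.
From mathcomp Require Import zify.

Fixpoint dis (i : nat) (q : seq btree) : option nat :=
  match q with
  | [::] => None
  | t :: r => match depth_of i t with Some d => Some d | None => dis i r end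
  end.

Fixpoint pairup (q : seq btree) : seq btree :=
  match q with
  | a :: b :: r => BNode a b :: pairup r
  | _ => [::]
  end.

Lemma iter_pairs m : forall s r, size s = m.*2 ->
  iter m step (s ++ r) = r ++ pairup s.
Proof.
elim: m => [|m IH] [|a [|b s]] r // H; try (simpl in H; lia).
  by rewrite cats0.
rewrite iterSr /= -cats1 -catA IH; last (simpl in H; lia).
by rewrite -catA.
Qed.

Lemma size_pairup m : forall s, size s = m.*2 -> size (pairup s) = m.
Proof.
elim: m => [|m IH] [|a [|b s]] //= H; try lia.
by rewrite IH; lia.
Qed.

Lemma dis_pairup m : forall s i, size s = m.*2 ->
  dis i (pairup s) = omap succn (dis i s).
Proof.
elim: m => [|m IH] [|a [|b s]] i //= H; try lia.
rewrite IH; last lia.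
by case: (depth_of i a) => //; case: (depth_of i b).
Qed.

Lemma dis_cat i r p : dis i (r ++ p) =
  match dis i r with Some d => Some d | None => dis i p end.
Proof.
elim: r => //= t r ->; by case: (depth_of i t).
Qed.

Lemma perfect k : forall q, size q = 2 ^ k ->
  exists T, iter (2 ^ k).-1 step q = [:: T] /\
   forall i, depth_of i T = omap (addn k) (dis i q).
Proof.
elim: k => [|k IH] q.
  case: q => [|t [|]] //= _; exists t; split => // i.
  by case: (depth_of i t) => //.
move=> Hq.
have Hs : size q = (2 ^ k).*2 by rewrite Hq expnS mul2n.
have [T [HT HD]] := IH (pairup q) (size_pairup _ _ Hs).
exists T; split.
  have -> : (2 ^ k.+1).-1 = (2 ^ k).-1 + 2 ^ k.
    rewrite expnS; have := expn_gt0 2 k; lia.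
  by rewrite iterD -[q]cats0 iter_pairs ?cats0 // cats0.
move=> i; rewrite HD (dis_pairup _ _ _ Hs).
case: (dis i q) => //= d; congr Some; lia.
Qed.

Lemma dis_leaves a b i : dis i (map BLeaf (iota a b)) =
  if (a <= i < a + b) then Some 0 else None.
Proof.
elim: b a => [|b IH] a /=; first by rewrite addn0; case: leqP => //= H; rewrite ltnNge H.
rewrite IH; case: eqP => [->|Hne]; first by rewrite leqnn addnS ltnS leq_addr.
case: ifP; case: ifP => //; lia.
Qed.

Theorem lemma2 (n : nat) (hn : 1 <= n) :
  exists T : btree,
    iter n.-1 step (init_queue n) = [:: T] /\
    (forall i, i < n ->
       depth_of i T = Some (up_log 2 n) \/ depth_of i T = Some (up_log 2 n).-1) /\
    (forall i j k, i < n -> j < n ->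
       depth_of i T = Some (up_log 2 n) ->
       depth_of j T = Some k -> k.+1 = up_log 2 n ->
       i < j).
Proof.
case: n hn => [//|[_|n _]].
  exists (BLeaf 0); split => //; split.
    by move=> i; rewrite ltnS leqn0 => /eqP ->; left.
  by move=> i j k _ _ _ _; rewrite up_log1.
set N := n.+2.
have H1 := up_logP N (isT : 1 < 2).
have H2 := up_log_gtn (isT : 1 < 2) (isT : 1 < N).
set L := up_log 2 N in H1 H2 *.
have HL : L = L.-1.+1 by case: L H1 H2 => //.
have HP : 2 ^ L = (2 ^ L.-1).*2 by rewrite HL expnS mul2n.
set P := 2 ^ L.-1 in HP H2.
set m := N - P.
have Hm2 : m.*2 <= N by rewrite HP in H1; lia.
have Hq : init_queue N = map BLeaf (iota 0 m.*2) ++ map BLeaf (iota m.*2 (N - m.*2)).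
  by rewrite /init_queue -map_cat -iotaD subnKC.
have Hsz : size (map BLeaf (iota 0 m.*2)) = m.*2 by rewrite size_map size_iota.
set r := map BLeaf (iota m.*2 (N - m.*2)).
set s := map BLeaf (iota 0 m.*2).
have Hsq : size (r ++ pairup s) = 2 ^ L.-1.
  by rewrite size_cat (size_pairup _ _ Hsz) /r size_map size_iota -/P; rewrite HP in H1; lia.
have [T [HT HD]] := perfect _ _ Hsq.
have Hdep : forall i, i < N -> depth_of i T = Some (if i < m.*2 then L else L.-1).
  move=> i Hi; rewrite HD dis_cat (dis_pairup _ _ _ Hsz) /r /s !dis_leaves.
  case: (ltnP i m.*2) => Hlt.
    rewrite /=; congr Some; rewrite {2}HL; lia.
  rewrite (_ : (i < m.*2 + (N - m.*2)) = true); last by lia.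
  rewrite /=; congr Some; lia.
exists T; split.
  have -> : N.-1 = (2 ^ L.-1).-1 + m.
    rewrite /m -/P; have := expn_gt0 2 L.-1; rewrite -/P; lia.
  by rewrite iterD Hq iter_pairs.
split.
  move=> i Hi; rewrite Hdep //; case: ifP; [left|right] => //.
move=> i j k Hi Hj; rewrite Hdep // Hdep // => Di Dk Hk.
case: Di Dk; case: ifP => Hii; case: ifP => Hjj => Di [Dk]; lia.
Qed.
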